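(* Consider the $r$-cGA with parameter $K$ on $r\text{-OneMax}$, with frequencies $p^{(t)}_{i,j}$ at iteration $t$, and let $\Delta_{i,r-1}:=p^{(t+1)}_{i,r-1}-p^{(t)}_{i,r-1}$. If $\frac1K\leq p^{(t)}_{i,r-1}\leq 1-\frac1K$, then, conditional on the frequencies at iteration $t$, \[\mathbb{E}(\Delta_{i,r-1}\mid p^{(t)})\geq \frac{8\,p^{(t)}_{i,r-1}(1-p^{(t)}_{i,r-1})}{9K\left(2\sqrt{3\sum_{j\neq i}p^{(t)}_{j,r-1}(1-p^{(t)}_{j,r-1})}+1\right)}.\]
   Context: Let $n\geq 1$, $r\geq 2$ be integers and $K>0$. The $r$-cGA maximizing $f$ maintains frequencies $p^{(t)}_{i,j}$ ($i\in\{1,\dots,n\}$, $j\in\{0,\dots,r-1\}$), initialized to $1/r$. In iteration $t$ it samples $x,y\in\{0,\dots,r-1\}^n$ independently, each position $i$ independently with $\Pr[x_i=j]=p^{(t)}_{i,j}$; if $f(x)<f(y)$ it swaps $x$ and $y$; then it sets $p^{(t+1)}_{i,j}=p^{(t)}_{i,j}+\frac1K(\mathbf{1}[x_i=j]-\mathbf{1}[y_i=j])$ for all $i,j$, with no margins. Here $f=r\text{-OneMax}$, $r\text{-OneMax}(x)=\sum_{i=1}^n\mathbf{1}[x_i=r-1]$. *)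

(* Defs.v *)
From HB Require Import structures.
From mathcomp Require Import all_boot all_order all_algebra.
From mathcomp Require Import reals.
Set Implicit Arguments. Unset Strict Implicit. Unset Printing Implicit Defensive.
Import Order.TTheory GRing.Theory Num.Theory.
Local Open Scope ring_scope.

Definition rOneMax (n r : nat) (x : {ffun 'I_n -> 'I_r}) : nat :=
  \sum_(i < n) (nat_of_ord (x i) == r.-1 : nat).

(* Frequencies p i j (= p_{i,j}); only j < r is meaningful. *)
Definition sample_prob (R : realType) (n r : nat) (p : 'I_n -> nat -> R)
  (x : {ffun 'I_n -> 'I_r}) : R :=
  \prod_(i < n) p i (nat_of_ord (x i)).

(* One iteration of the r-cGA (no margins), given the two samples x, y:
   if f(x) < f(y) they are swapped; winner w, loser l;
   p'_{i,j} = p_{i,j} + (1/K)(1[w_i=j] - 1[l_i=j]). *)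
Definition rcga_update (R : realType) (n r : nat) (K : R) (p : 'I_n -> nat -> R)
  (x y : {ffun 'I_n -> 'I_r}) : 'I_n -> nat -> R :=
  let w := if (rOneMax x < rOneMax y)%N then y else x in
  let l := if (rOneMax x < rOneMax y)%N then x else y in
  fun i j => p i j + K^-1 * (((nat_of_ord (w i) == j) : nat)%:R
                             - ((nat_of_ord (l i) == j) : nat)%:R).

Definition expected_delta_top (R : realType) (n r : nat) (K : R)
  (p : 'I_n -> nat -> R) (i : 'I_n) : R :=
  \sum_(x : {ffun 'I_n -> 'I_r}) \sum_(y : {ffun 'I_n -> 'I_r})
    @sample_prob R n r p x * @sample_prob R n r p y *
    (@rcga_update R n r K p x y i r.-1 - p i r.-1).

(* Main.v *)
Require Import Defs.
From HB Require Import structures.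
From mathcomp Require Import all_boot all_order all_algebra.
From mathcomp Require Import reals.
From mathcomp Require Import ring lra zify.
Set Implicit Arguments. Unset Strict Implicit. Unset Printing Implicit Defensive.
Import Order.TTheory GRing.Theory Num.Theory.
Local Open Scope ring_scope.

Section F.
Variable R : realType.

Fixpoint ff (l : seq R) (j : int) : R :=
  match l with
  | [::] => (j == 0)%:R
  | u :: l' => u * ff l' (j + 1) + (1 - 2 * u) * ff l' j + u * ff l' (j - 1)
  end.

Definition okl (l : seq R) := all (fun u => (0 <= u) && (u <= 1/4)) l.

Lemma ff_ge0 l j : okl l -> 0 <= ff l j.
Proof.
elim: l j => [|u l IH] j /=; first by case: (j == 0).
case/andP=> /andP [u0 u1] ok.
have := IH (j+1) ok; have := IH j ok; have := IH (j-1) ok.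
move=> a b c.
have h1: 0 <= u * ff l (j+1) by rewrite mulr_ge0.
have h2: 0 <= (1 - 2*u) * ff l j by rewrite mulr_ge0 // ; lra.
have h3: 0 <= u * ff l (j-1) by rewrite mulr_ge0.
lra.
Qed.

Lemma ff_out l j : (size l < `|j|)%N -> ff l j = 0.
Proof.
elim: l j => [|u l IH] j /=.
  by case: j => [[|k]|k].
move=> h.
rewrite IH ?[ff l j]IH ?[ff l (j-1)]IH ?mulr0 ?addr0 //; lia.
Qed.

Lemma ff_sym l j : ff l (- j) = ff l j.
Proof.
elim: l j => [|u l IH] j /=; first by rewrite oppr_eq0.
have -> : - j + 1 = - (j - 1) by ring.
have -> : - j - 1 = - (j + 1) by ring.
rewrite !IH; ring.
Qed.

Lemma ff_mono l (k : nat) : okl l -> ff l (k.+1%:Z) <= ff l k.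
Proof.
elim: l k => [|u l IH] k /=; first by case: k.
case/andP=> /andP [u0 u1] ok.
have IHz : forall j : int, 0 <= j -> ff l (j + 1) <= ff l j.
  move=> [m|m] hm //; have := IH m ok.
  by have -> : m%:Z + 1 = m.+1%:Z by lia.
have -> : (k.+1%:Z) = k%:Z + 1 by lia.
have -> : k%:Z + 1 - 1 = k%:Z by ring.
have A1 := IHz (k%:Z + 1) ltac:(lia).
have A2 := IHz (k%:Z) ltac:(lia).
have B1: u * (ff l (k%:Z + 1) - ff l (k%:Z + 1 + 1)) >= 0 by rewrite mulr_ge0 // subr_ge0.
case: k A1 A2 B1 => [|k] A1 A2 B1.
  rewrite add0r sub0r ff_sym.
  rewrite add0r in A1 A2 B1 *.
  have: (1 - 3 * u) * (ff l 0 - ff l 1) >= 0 by rewrite mulr_ge0 ?subr_ge0 //; lra.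
  lra.
have A3 := IHz (k.+1%:Z - 1) ltac:(lia).
rewrite subrK in A3.
have: (1 - 2 * u) * (ff l (k.+1%:Z) - ff l (k.+1%:Z + 1)) >= 0 by rewrite mulr_ge0 ?subr_ge0 //; lra.
have: u * (ff l (k.+1%:Z - 1) - ff l (k.+1%:Z)) >= 0 by rewrite mulr_ge0 // subr_ge0.
lra.
Qed.

Lemma ff_max l j : okl l -> ff l j <= ff l 0.
Proof.
move=> ok.
have H : forall k : nat, ff l k <= ff l 0.
  elim=> [|k IH] //; exact: le_trans (ff_mono k ok) IH.
case: j => [k|k]; first exact: H.
by rewrite NegzE ff_sym; exact: H.
Qed.

Definition T (W : nat) (g : int -> R) := \sum_(m < (2*W).+1) g (m%:Z - W%:Z).

Lemma T_shiftP W g : (forall j : int, (W <= `|j|)%N -> g j = 0) ->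
  T W (fun j => g (j + 1)) = T W g.
Proof.
move=> h; rewrite /T big_ord_recr big_ord_recl /=.
rewrite [g (_ + 1)]h; last by lia.
rewrite [g (0%:Z - _)]h; last by lia.
rewrite addr0 add0r; apply: eq_bigr => m _.
congr g; rewrite /bump /=; lia.
Qed.

Lemma T_shiftN W g : (forall j : int, (W <= `|j|)%N -> g j = 0) ->
  T W (fun j => g (j - 1)) = T W g.
Proof.
move=> h; rewrite /T [LHS]big_ord_recl [RHS]big_ord_recr /=.
rewrite [g (0%Z - _ - 1)]h; last by lia.
rewrite [g ((2 * W)%N%:Z - _)]h; last by lia.
rewrite addr0 add0r; apply: eq_bigr => m _.
congr g; rewrite /bump /=; lia.
Qed.

Lemma T_lin W (g1 g2 : int -> R) a b :
  T W (fun j => a * g1 j + b * g2 j) = a * T W g1 + b * T W g2.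
Proof. by rewrite /T big_split /= -!mulr_sumr. Qed.

Lemma T_ext W (g1 g2 : int -> R) : (forall j, g1 j = g2 j) -> T W g1 = T W g2.
Proof. by move=> h; apply: eq_bigr => m _; rewrite h. Qed.

Lemma sum_ind (K M : nat) (g : nat -> R) : (M < K)%N ->
  \sum_(m < K) (M == m)%:R * g m = g M.
Proof.
elim: K => [|K IH] // hM.
rewrite big_ord_recr /=.
case: (ltnP M K) => h.
  by rewrite IH // (_ : (M == K) = false) ?mul0r ?addr0 //; lia.
have eMK : M = K by lia.
rewrite big1 ?add0r; first by rewrite eMK eqxx mul1r.
by move=> m _; rewrite (_ : (M == m) = false) ?mul0r //; have := ltn_ord m; lia.
Qed.

Lemma ff_sum l W : (size l < W)%N -> T W (ff l) = 1.
Proof.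
elim: l W => [|u l IH] W /= hW.
  rewrite /T; transitivity (\sum_(m < (2*W).+1) (W == m)%:R * (fun _ => 1 : R) m); last first.
    by apply: sum_ind; lia.
  apply: eq_bigr => m _; rewrite mulr1; congr (nat_of_bool _)%:R; apply/eqP/eqP; lia.
have vz : forall j : int, (W <= `|j|)%N -> ff l j = 0.
  by move=> j hj; apply: ff_out; lia.
rewrite (@T_ext W _ (fun j => u * (ff l (j+1) + ff l (j-1)) + (1 - 2*u) * ff l j)); last first.
  by move=> j; ring.
rewrite T_lin (@T_ext W _ (fun j => 1 * ff l (j+1) + 1 * ff l (j-1))); last first.
  by move=> j; ring.
rewrite T_lin T_shiftP // T_shiftN // IH; [ring|lia].
Qed.

Lemma ff_mom l W : (size l < W)%N ->
  T W (fun j => (j%:~R)^+2 * ff l j) = 2 * \sum_(u <- l) u.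
Proof.
elim: l W => [|u l IH] W /= hW.
  rewrite big_nil /T big1 ?mulr0 //.
  by move=> m _; case: (_ - _ =P 0) => [->|]; rewrite ?mulr0 ?expr0n ?mul0r.
have vz : forall j : int, (W <= `|j|)%N -> ff l j = 0.
  by move=> j hj; apply: ff_out; lia.
pose h1 := fun j : int => ((j - 1)%:~R)^+2 * ff l j.
pose h2 := fun j : int => ((j + 1)%:~R)^+2 * ff l j.
rewrite (@T_ext W _ (fun j => u * h1 (j+1) + u * h2 (j - 1) + (1 - 2*u) * ((j%:~R)^+2 * ff l j))); last first.
  by move=> j; rewrite /h1 /h2 addrK subrK; ring.
rewrite (@T_ext W _ (fun j => 1 * (u * h1 (j+1) + u * h2 (j - 1)) + (1 - 2*u) * ((j%:~R)^+2 * ff l j))); last first.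
  by move=> j; ring.
rewrite !T_lin T_shiftP; last by move=> j hj; rewrite /h1 vz ?mulr0.
rewrite T_shiftN; last by move=> j hj; rewrite /h2 vz ?mulr0.
have E : T W h1 + T W h2 = 2 * T W (fun j => (j%:~R)^+2 * ff l j) + 2 * T W (ff l).
  rewrite -T_lin -[T W h1]mul1r -[T W h2]mul1r -T_lin; apply: T_ext => j.
  rewrite /h1 /h2 !intrD; ring.
have E2 : 1 * (u * T W h1 + u * T W h2) = u * (T W h1 + T W h2) by ring.
rewrite E2 E ff_sum ?IH ?big_cons; [ring|lia|lia].
Qed.


Lemma sum_pt (K : nat) (d : int) :
  \sum_(m < K) ((m%:Z == d) : nat)%:R = (((0 <= d) && (d < K%:Z)) : nat)%:R :> R.
Proof.
elim: K => [|K IH]; first by rewrite big_ord0; case: d => [[|k]|k].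
rewrite big_ord_recr /= IH.
case: (eqVneq (K%:Z) d) => [<-|ne].
  by rewrite ltxx andbF (_ : (K%:Z < K.+1%:Z) = true) ?add0r //; lia.
rewrite addr0; congr (nat_of_bool _)%:R.
have: d != K%:Z by rewrite eq_sym.
clear IH; case: d ne => k ne ne'; lia.
Qed.

Lemma T_pt W c : T W (fun j => ((j == c) : nat)%:R) <= 1.
Proof.
rewrite /T (eq_bigr (fun m : 'I_(2*W).+1 => ((m%:Z == c + W%:Z) : nat)%:R)); last first.
  move=> m _; congr (nat_of_bool _)%:R; apply/eqP/eqP; lia.
by rewrite sum_pt; case: (_ && _); rewrite ?ler01.
Qed.

Lemma T_le W (g1 g2 : int -> R) : (forall j, g1 j <= g2 j) -> T W g1 <= T W g2.
Proof. by move=> h; apply: ler_sum => m _. Qed.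

Lemma T_count W t : T W (fun j => ((`|j| < t.+1)%N : nat)%:R) <= (2 * t + 1)%:R.
Proof.
elim: t => [|t IH].
  rewrite muln0 add0n; apply: le_trans (T_pt W 0).
  apply: T_le => j; rewrite le_eqVlt; apply/orP; left; apply/eqP.
  congr (nat_of_bool _)%:R; apply/idP/idP; lia.
have E : T W (fun j => ((`|j| < t.+2)%N : nat)%:R) =
  1 * T W (fun j => ((`|j| < t.+1)%N : nat)%:R) + 1 * T W (fun j => 1 * ((j == t.+1%:Z) : nat)%:R + 1 * ((j == - t.+1%:Z) : nat)%:R).
  rewrite -T_lin; apply: T_ext => j; rewrite !mul1r -!natrD; congr (_%:R).
  case: j => k; lia.
rewrite E T_lin !mul1r.
have := T_pt W (t.+1%:Z); have := T_pt W (- t.+1%:Z).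
move=> a b.
have -> : (2 * t.+1 + 1)%N = ((2 * t + 1) + 1 + 1)%N by lia.
rewrite !natrD; lra.
Qed.

Definition Ssum (l : seq R) := \sum_(u <- l) u.

Lemma Ssum_ge0 l : okl l -> 0 <= Ssum l.
Proof.
rewrite /Ssum; elim: l => [|u l IH]; rewrite ?big_nil ?big_cons //= => /andP [/andP [u0 _] ok].
by rewrite addr_ge0 // IH.
Qed.

Lemma ff_bound l : okl l ->
  4 / (9 * (2 * Num.sqrt (3 * Ssum l) + 1)) <= ff l 0.
Proof.
move=> ok.
have S0 := Ssum_ge0 ok.
set S := Ssum l in S0 *.
set s := Num.sqrt (3 * S).
have s0 : 0 <= s by apply: sqrtr_ge0.
have ss : s ^+ 2 = 3 * S by rewrite sqr_sqrtr // mulr_ge0 //.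
pose t := (Num.truncn (3 / 2 * s)).+1.
have t1 : (t%:R : R) <= 3 / 2 * s + 1.
  rewrite /t -addn1 natrD lerD2r truncn_le; apply: mulr_ge0 => //; lra.
have t2 : 3 / 2 * s < (t%:R : R).
  by rewrite /t -truncn_le_nat.
pose W := maxn (size l).+1 t.
have hW : (size l < W)%N by rewrite /W; lia.
have f0 := ff_ge0 0 ok.
have tp : (0 : R) < t%:R by rewrite ltr0n.
have key : T W (ff l) <= T W (fun j => ff l 0 * ((`|j| < t)%N : nat)%:R + (t%:R ^+ 2)^-1 * ((j%:~R) ^+ 2 * ff l j)).
  apply: T_le => j.
  have fj := ff_ge0 j ok.
  have jj : 0 <= (j%:~R : R) ^+ 2 by apply: sqr_ge0.
  case: (ltnP `|j| t) => hj /=.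
    rewrite mulr1; have := ff_max j ok.
    have : 0 <= (t%:R ^+ 2)^-1 * ((j%:~R : R) ^+ 2 * ff l j) by rewrite mulr_ge0 ?invr_ge0 ?sqr_ge0 // mulr_ge0.
    lra.
  rewrite mulr0 add0r ler_pdivlMl ?exprn_gt0 //.
  apply: ler_wpM2r => //.
  have -> : (j%:~R : R) ^+ 2 = (`|j|%N%:R) ^+ 2.
    by clear fj jj; case: j hj => k hk; rewrite ?NegzE /= ?intrN ?sqrrN //.
  by rewrite lerXn2r ?nnegrE ?ler0n // ler_nat.
rewrite T_lin ff_sum // ff_mom // -/(Ssum l) -/S in key.
have C : T W (fun j => ((`|j| < t)%N : nat)%:R) <= (2 * t.-1 + 1)%:R.
  by rewrite /t /=; apply: T_count.
have C' : ((2 * t.-1 + 1)%N%:R : R) = 2 * t%:R - 1.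
  by rewrite /t /= natrD natrM; rewrite -addn1 natrD; ring.
rewrite C' in C.
have fC := ler_wpM2l f0 C.
have hS : (t%:R ^+ 2)^-1 * (2 * S) <= 8 / 27.
  rewrite ler_pdivrMl ?exprn_gt0 //.
  have : (3/2 * s) ^+ 2 <= t%:R ^+ 2 by rewrite !expr2; nra.
  rewrite exprMn ss; lra.
rewrite ler_pdivrMr; last by apply: mulr_gt0 => //; lra.
have : 19 / 27 <= ff l 0 * (3 * s + 1) .
  have : ff l 0 * (2 * t%:R - 1) <= ff l 0 * (3 * s + 1).
    by apply: ler_wpM2l => //; lra.
  lra.
move=> h.
have : 0 <= ff l 0 * s by rewrite mulr_ge0.
lra.
Qed.


Definition Pu (u : R) : {poly R} := u%:P + (1 - 2 * u)%:P * 'X + u%:P * 'X^2.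

Lemma G_coef l (m : nat) :
  (\prod_(u <- l) Pu u)`_m = ff l (m%:Z - (size l)%:Z).
Proof.
elim: l m => [|u l IH] m.
  rewrite big_nil coef1 /= subr0; congr (nat_of_bool _)%:R; apply/eqP/eqP; lia.
rewrite big_cons; set G := \prod_(_ <- l) _; rewrite /Pu mulrDl mulrDl coefD coefD coefCM -!mulrA coefCM coefCM. rewrite !coefXM /=. 
set L := size l.
have e1 : m%:Z - L.+1%:Z + 1 = m%:Z - L%:Z by lia.
rewrite e1 -IH; clear e1; congr (_ + _ + _).
  case: m => [|m] /=.
    by rewrite ff_out ?mulr0 //; lia.
  by rewrite IH; congr (_ * ff l _); lia.
case: m => [|[|m]] /=.
- by rewrite ff_out ?mulr0 //; lia.
- by rewrite ff_out ?mulr0 //; lia.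
by rewrite IH; congr (_ * ff l _); lia.
Qed.

End F.

Section B.
Variables (R : realType) (n r' : nat) (p : 'I_n -> nat -> R) (i : 'I_n).
Hypothesis hsum : forall k, \sum_(j < r'.+2) p k j = 1.

Local Notation FT := {ffun 'I_n -> 'I_r'.+2}.
Definition topb (j : 'I_r'.+2) : bool := nat_of_ord j == r'.+1.
Definition Ex (neg : bool) (x : FT) : nat := \sum_(k < n | k != i) (topb (x k) (+) neg : nat).
Definition Nn : nat := \sum_(k < n | k != i) 1%N.
Definition q k := p k r'.+1.
Definition sp (x : FT) := @sample_prob R n r'.+2 p x.
Definition lin (neg : bool) k : {poly R} :=
  if neg then (q k)%:P + (1 - q k)%:P * 'X else (1 - q k)%:P + (q k)%:P * 'X.
Definition cc (a : bool) := if a then q i else 1 - q i.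

Lemma sum_noTop k : \sum_(j < r'.+2 | ~~ topb j) p k j = 1 - q k.
Proof.
have := hsum k; rewrite (bigD1 ord_max) //= => h.
rewrite -h /q [p k r'.+1 + _]addrC addrK; apply: eq_bigl => j; by [].
Qed.

Lemma lin_eq neg k : \sum_(j < r'.+2) (p k j)%:P * 'X^(topb j (+) neg) = lin neg k.
Proof.
rewrite (bigD1 ord_max) //= /lin /topb eqxx.
have E : \sum_(j < r'.+2 | j != ord_max) (p k j)%:P * 'X^((nat_of_ord j == r'.+1) (+) neg)
   = (\sum_(j < r'.+2 | ~~ topb j) p k j)%:P * 'X^neg.
  rewrite rmorph_sum mulr_suml; apply: eq_big => // j hj.
  by have -> : (nat_of_ord j == r'.+1) = false by exact: negbTE hj.
rewrite E sum_noTop; clear E; case: neg => /=; rewrite ?expr0 ?expr1 ?mulr1 /q; ring.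
Qed.

Lemma cc_eq a : \sum_(j < r'.+2) p i j * (topb j == a)%:R = cc a.
Proof.
rewrite (bigD1 ord_max) //= /cc /topb eqxx.
case: a => /=.
  rewrite mulr1 big1 ?addr0 // => j hj; have -> : (nat_of_ord j == r'.+1) = false by exact: negbTE hj.
  by rewrite mulr0.
rewrite mulr0 add0r -sum_noTop big_mkcond [RHS]big_mkcond /=; apply: eq_bigr => j _.
have -> : (j != ord_max) = ~~ (nat_of_ord j == r'.+1) by [].
by rewrite /topb; case: (_ == _); rewrite /= ?mulr1.
Qed.

Lemma PX_eq neg a :
  \sum_(x : FT) ((sp x * (topb (x i) == a)%:R)%:P * 'X^(Ex neg x))
  = (cc a)%:P * \prod_(k < n | k != i) lin neg k.
Proof.
pose F (k : 'I_n) (j : 'I_r'.+2) := if k == i then (p k j * (topb j == a)%:R)%:P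
              else (p k j)%:P * 'X^(topb j (+) neg).
transitivity (\sum_(f : FT) \prod_k F k (f k)).
  apply: eq_bigr => x _; rewrite (bigD1 i) //= /F eqxx.
  under eq_bigr => k hk do rewrite (negbTE hk).
  rewrite big_split /= prodrXr -rmorph_prod /sp /sample_prob (bigD1 i) //=.
  rewrite /Ex mulrA -polyCM; congr (_%:P * _); ring.
rewrite -bigA_distr_bigA (bigD1 i) //= /F eqxx.
congr (_ * _).
  by rewrite -rmorph_sum cc_eq.
by apply: eq_bigr => k hk; rewrite (negbTE hk) lin_eq.
Qed.


Lemma lin_prod k : lin false k * lin true k = Pu (q k * (1 - q k)).
Proof.
rewrite /lin /Pu !rmorphM !rmorphB !rmorph1 /= rmorphM /= expr2.
rewrite (_ : (2 : R)%:P = 2); last by rewrite rmorphD rmorph1.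
ring.
Qed.

Definition PX neg a := \sum_(x : FT) ((sp x * (topb (x i) == a)%:R)%:P * 'X^(Ex neg x)).

Lemma coef_PXY a b m : (PX false a * PX true b)`_m =
  \sum_(x : FT) \sum_(y : FT) sp x * sp y * (topb (x i) == a)%:R * (topb (y i) == b)%:R
     * (m == Ex false x + Ex true y)%:R.
Proof.
rewrite /PX mulr_suml coef_sum; apply: eq_bigr => x _.
rewrite mulr_sumr coef_sum; apply: eq_bigr => y _.
rewrite mulrACA -polyCM -exprD coefCM coefXn; ring.
Qed.

Lemma Ex_le neg x : (Ex neg x <= Nn)%N.
Proof. by apply: leq_sum => k _; case: (_ (+) _). Qed.

Lemma Ex_comp y : (Ex false y + Ex true y)%N = Nn.
Proof. by rewrite /Ex -big_split /=; apply: eq_bigr => k _; case: (topb _). Qed.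

Lemma rOne x : rOneMax x = (topb (x i) + Ex false x)%N.
Proof.
rewrite /rOneMax (bigD1 i) //=; congr (_ + _)%N.
by apply: eq_bigr => k _; rewrite addbF.
Qed.

Lemma sum_g a b (g : nat -> R) :
  \sum_(x : FT) \sum_(y : FT) sp x * sp y * (topb (x i) == a)%:R * (topb (y i) == b)%:R
     * g (Ex false x + Ex true y)%N
  = \sum_(m < (2 * Nn).+1) g m * (PX false a * PX true b)`_m.
Proof.
symmetry.
under eq_bigr => m _ do rewrite coef_PXY mulr_sumr.
rewrite exchange_big /=; apply: eq_bigr => x _.
under eq_bigr => m _ do rewrite mulr_sumr.
rewrite exchange_big /=; apply: eq_bigr => y _.
symmetry.
have hM : ((Ex false x + Ex true y) < (2 * Nn).+1)%N.
  have := Ex_le false x; have := Ex_le true y; lia.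
rewrite -(sum_ind g hM) mulr_sumr; apply: eq_bigr => m _.
by rewrite [(nat_of_ord m == _)]eq_sym; ring.
Qed.


Definition h10 (m : nat) : R := if (1 + m < Nn)%N then -1 else 1.
Definition h01 (m : nat) : R := if (m < 1 + Nn)%N then 1 else -1.

Lemma upd_eq K x y :
  @rcga_update R n r'.+2 K p x y i r'.+1 - p i r'.+1 =
  K^-1 * ((topb (x i) == true)%:R * (topb (y i) == false)%:R * h10 (Ex false x + Ex true y)
        + (topb (x i) == false)%:R * (topb (y i) == true)%:R * h01 (Ex false x + Ex true y)).
Proof.
rewrite /rcga_update !rOne.
have hc := Ex_comp y.
move: (Ex false x) (Ex false y) (Ex true y) hc => A B C hc.
rewrite /h10 /h01 /topb.
case tx: (nat_of_ord (x i) == r'.+1); case ty: (nat_of_ord (y i) == r'.+1) => /=;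
  case: ifP => hlt /=; rewrite ?tx ?ty /=.
all: rewrite ?mul0r ?mulr0 ?add0r ?addr0 ?mul1r.
all: try (rewrite ifT; last by lia); try (rewrite ifF; last by lia); try ring.
Qed.

End B.

Theorem lemma3 (R : realType) (n r : nat) (K : R) (p : 'I_n -> nat -> R)
  (i : 'I_n) :
  (1 <= n)%N -> (2 <= r)%N -> 0 < K ->
  (forall k j, (j < r)%N -> 0 <= p k j) ->
  (forall k, \sum_(j < r) p k j = 1) ->
  K^-1 <= p i r.-1 <= 1 - K^-1 ->
  @expected_delta_top R n r K p i >=
    8 * p i r.-1 * (1 - p i r.-1) /
    (9 * K * (2 * Num.sqrt (3 * \sum_(k < n | k != i) p k r.-1 * (1 - p k r.-1)) + 1)).
Proof.
move=> n1 r2 K0.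
case: r r2 => [|[|r']] // _ hp0 hsum hpi /=.
have q01 : forall k, 0 <= q r' p k <= 1.
  move=> k; have := hsum k; rewrite (bigD1 ord_max) //= => h.
  have : 0 <= \sum_(j < r'.+2 | j != ord_max) p k j by apply: sumr_ge0 => j _; apply: hp0.
  have := hp0 k r'.+1 (ltnSn _); rewrite /q; lra.
pose G := \prod_(k < n | k != i) Pu (q r' p k * (1 - q r' p k)).
pose l := map (fun k => q r' p k * (1 - q r' p k)) (filter (fun k => k != i) (index_enum 'I_n)).
have Gl : G = \prod_(u <- l) Pu u by rewrite /G /l big_map big_filter.
have Nl : Nn i = size l.
  by rewrite /Nn /l size_map -sum1_size big_filter.
have Sl : \sum_(k < n | k != i) p k r'.+1 * (1 - p k r'.+1) = Ssum l.
  by rewrite /Ssum /l big_map big_filter.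
have okl_l : okl l.
  apply/allP => u /mapP [k _ ->]; have := q01 k; move=> /andP [h1 h2].
  apply/andP; split; first by apply: mulr_ge0; lra.
  have h := sqr_ge0 (q r' p k - 1/2); rewrite expr2 in h; nra.
have PXX : forall a b, PX r' p i false a * PX r' p i true b = (cc r' p i a * cc r' p i b)%:P * G.
  move=> a b; rewrite /PX !PX_eq // polyCM mulrACA; congr (_ * _).
  rewrite -big_split; apply: eq_bigr => k _. exact: lin_prod.
have E : @expected_delta_top R n r'.+2 K p i =
   K^-1 * (\sum_(x : {ffun 'I_n -> 'I_r'.+2}) \sum_(y : {ffun 'I_n -> 'I_r'.+2})
      sp p x * sp p y * (topb (x i) == true)%:R * (topb (y i) == false)%:R * h10 R i (Ex i false x + Ex i true y)%N
    + \sum_(x : {ffun 'I_n -> 'I_r'.+2}) \sum_(y : {ffun 'I_n -> 'I_r'.+2})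
      sp p x * sp p y * (topb (x i) == false)%:R * (topb (y i) == true)%:R * h01 R i (Ex i false x + Ex i true y)%N).
  rewrite /expected_delta_top -big_split mulr_sumr; apply: eq_bigr => x _.
  rewrite -big_split mulr_sumr; apply: eq_bigr => y _.
  rewrite /= upd_eq /sp; ring.
rewrite E !sum_g !PXX.
have E2 : \sum_(m < (2 * Nn i).+1) h10 R i m * ((cc r' p i true * cc r' p i false)%:P * G)`_m +
          \sum_(m < (2 * Nn i).+1) h01 R i m * ((cc r' p i false * cc r' p i true)%:P * G)`_m
        = cc r' p i true * cc r' p i false * \sum_(m < (2 * Nn i).+1) (h10 R i m + h01 R i m) * G`_m.
  rewrite -big_split mulr_sumr; apply: eq_bigr => m _; rewrite !coefCM /=; ring.
rewrite E2.
have Gc : forall m : nat, G`_m = ff l (m%:Z - (size l)%:Z) by move=> m; rewrite Gl G_coef.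
have hN : (Nn i < (2 * Nn i).+1)%N by lia.
have Sge : 2 * ff l 0 <= \sum_(m < (2 * Nn i).+1) (h10 R i m + h01 R i m) * G`_m.
  rewrite (bigD1 (Ordinal hN)) //=.
  have -> : h10 R i (Nn i) + h01 R i (Nn i) = 2.
    by rewrite /h10 /h01 ifF ?ifT //; lia.
  rewrite Gc -Nl subrr.
  have : 0 <= \sum_(m < (2 * Nn i).+1 | m != Ordinal hN) (h10 R i m + h01 R i m) * G`_m.
    apply: sumr_ge0 => m _; apply: mulr_ge0; last by rewrite Gc; apply: ff_ge0.
    rewrite /h10 /h01; case: ifP => h1; case: ifP => h2; try lra; lia.
  lra.
have Fb := ff_bound okl_l.
have qi := q01 i.
rewrite -Sl in Fb; rewrite /cc /q.
set s := Num.sqrt _ in Fb *.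
have s0 : 0 <= s by apply: sqrtr_ge0.
have cq : 0 <= K^-1 * (p i r'.+1 * (1 - p i r'.+1)).
  have k1 : 0 <= K^-1 by rewrite invr_ge0 ltW.
  have k2 : 0 <= p i r'.+1 * (1 - p i r'.+1).
    by apply: mulr_ge0; move: qi => /andP [? ?]; lra.
  exact: mulr_ge0.
have -> : 8 * p i r'.+1 * (1 - p i r'.+1) / (9 * K * (2 * s + 1)) =
   K^-1 * (p i r'.+1 * (1 - p i r'.+1)) * (2 * (4 / (9 * (2 * s + 1)))).
  field; apply/andP; split; apply/negP => /eqP; lra.
rewrite [in X in _ <= X]mulrA; apply: ler_wpM2l => //.
apply: le_trans Sge.
by apply: ler_wpM2l; [lra | exact: Fb].
Qed.
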